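(* There exists a Heffter array $H(n;k)$ for all $n\equiv 2\pmod 4$ with $n\ge 6$ and all $k\equiv 1\pmod 4$ with $5\le k<n$.
   Context: A Heffter array $H(n;k)$ is an $n\times n$ array in which some cells are filled with nonzero integers and the others are empty, such that: each row and each column contains exactly $k$ filled cells; the entries of every row and of every column sum to $0$ modulo $2nk+1$; and for each integer $1\le x\le nk$, exactly one of $x$ or $-x$ appears in the array, and it appears exactly once. *)

(* Defs.v *)
From mathcomp Require Import all_boot all_order all_algebra.
Set Implicit Arguments. Unset Strict Implicit. Unset Printing Implicit Defensive.
Import Order.TTheory GRing.Theory Num.Theory.
Local Open Scope ring_scope.

(* A partially filled n x n array: [None] = empty cell, [Some a] = cell filled
   with the integer a. *)
Definition parray (n : nat) := 'I_n -> 'I_n -> option int.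

Definition cell_val (c : option int) : int := if c is Some a then a else 0.

Definition filled (c : option int) : bool := c != None.

Definition is_heffter (n k : nat) (A : parray n) : Prop :=
  let m : int := (2 * n * k + 1)%N%:Z in
  (forall i j a, A i j = Some a -> a != 0) /\
  (forall i : 'I_n, #|[set j : 'I_n | filled (A i j)]| = k) /\
  (forall j : 'I_n, #|[set i : 'I_n | filled (A i j)]| = k) /\
  (forall i : 'I_n, ((\sum_(j : 'I_n) cell_val (A i j)) %% m)%Z = 0) /\
  (forall j : 'I_n, ((\sum_(i : 'I_n) cell_val (A i j)) %% m)%Z = 0) /\
  (forall x : nat, (1 <= x <= n * k)%N ->
     #|[set ij : 'I_n * 'I_n |
         (A ij.1 ij.2 == Some (x%:Z)) || (A ij.1 ij.2 == Some (- x%:Z))]| = 1%N).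

(* Main.v *)
Require Import Defs.
From mathcomp Require Import all_boot all_order all_algebra.
From mathcomp Require Import zify ring lra.
Set Implicit Arguments. Unset Strict Implicit. Unset Printing Implicit Defensive.
Import Order.TTheory GRing.Theory Num.Theory.

Lemma sum_pairs (F : nat -> int) (a c : nat) :
  (\sum_(a <= d < a + 2 * c) F d = \sum_(b < c) (F (a + 2 * b)%N + F (a + 2 * b + 1)%N))%R.
Proof.
elim: c => [|c IH]; first by rewrite muln0 addn0 big_geq // big_ord0.
rewrite big_ord_recr /= -IH.
have -> : (a + 2 * c.+1 = (a + 2 * c).+1.+1)%N by lia.
rewrite big_nat_recr /=; last by lia.
rewrite big_nat_recr /=; last by lia.
by rewrite -addrA addn1.
Qed.

Section Supp.
Variables h t : nat.
Hypothesis t_gt0 : (0 < t)%N.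
Hypothesis tle : (2 * t + 1 <= h)%N.

Definition inS (d : nat) : bool :=
  [|| (d < 2 * t + 1)%N, ((h <= d) && (d < h + 2 * t - 1))%N | d == (2 * h - 1)%N].

Lemma sum_supp (F : nat -> int) :
  (\sum_(d < 2 * h) (if inS d then F d else 0) =
   F (2 * h - 1)%N + F 0%N + F 1%N + F 2%N + F h +
   \sum_(b < t - 1) (F (3 + 2 * b)%N + F (4 + 2 * b)%N + F (h + 1 + 2 * b)%N + F (h + 2 + 2 * b)%N))%R.
Proof.
rewrite -(big_mkord xpredT (fun d => if inS d then F d else 0)).
rewrite (big_cat_nat _ (n := 3)) //=; try lia.
rewrite (big_cat_nat _ (m := 3) (n := 2 * t + 1)) //=; try lia.
rewrite (big_cat_nat _ (m := 2 * t + 1) (n := h)) //=; try lia.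
rewrite (big_cat_nat _ (m := h) (n := h + 1)) //=; try lia.
rewrite (big_cat_nat _ (m := h + 1) (n := h + 2 * t - 1)) //=; try lia.
rewrite (big_cat_nat _ (m := h + 2 * t - 1) (n := 2 * h - 1)) //=; try lia.
have E1 : (\sum_(0 <= i < 3) (if inS i then F i else 0) = F 0%N + F 1%N + F 2%N)%R.
  rewrite big_ltn // big_ltn // big_ltn // big_geq //.
  rewrite /inS /=; have -> : (0 < 2 * t + 1)%N by lia.
  have -> : (1 < 2 * t + 1)%N by lia. have -> : (2 < 2 * t + 1)%N by lia.
  by rewrite /= addr0 addrA.
have E2 : (\sum_(3 <= i < 2 * t + 1) (if inS i then F i else 0) =
           \sum_(b < t - 1) (F (3 + 2 * b)%N + F (3 + 2 * b + 1)%N))%R.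
  rewrite -sum_pairs; have -> : (3 + 2 * (t - 1) = 2 * t + 1)%N by lia.
  apply: eq_big_nat => i /andP [H1 H2]; rewrite /inS; have -> : (i < 2 * t + 1)%N by lia. by [].
have E3 : (\sum_(2 * t + 1 <= i < h) (if inS i then F i else 0) = 0)%R.
  rewrite big1_seq // => i; rewrite mem_index_iota => /andP [H1 H2].
  rewrite /inS; have -> : (i < 2 * t + 1)%N = false by lia.
  have -> : ((h <= i) && (i < h + 2 * t - 1))%N = false by lia.
  have -> : (i == 2 * h - 1)%N = false by lia. by [].
have E4 : (\sum_(h <= i < h + 1) (if inS i then F i else 0) = F h)%R.
  rewrite addn1 big_nat1 /inS; have -> : (h <= h) && (h < h + 2 * t - 1)%N by lia.
  by rewrite orbT.
have E5 : (\sum_(h + 1 <= i < h + 2 * t - 1) (if inS i then F i else 0) =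
           \sum_(b < t - 1) (F (h + 1 + 2 * b)%N + F (h + 1 + 2 * b + 1)%N))%R.
  rewrite -sum_pairs; have -> : (h + 1 + 2 * (t - 1) = h + 2 * t - 1)%N by lia.
  apply: eq_big_nat => i /andP [H1 H2]; rewrite /inS.
  have -> : ((h <= i) && (i < h + 2 * t - 1))%N by lia. by rewrite orbT.
have E6 : (\sum_(h + 2 * t - 1 <= i < 2 * h - 1) (if inS i then F i else 0) = 0)%R.
  rewrite big1_seq // => i; rewrite mem_index_iota => /andP [H1 H2].
  rewrite /inS; have -> : (i < 2 * t + 1)%N = false by lia.
  have -> : ((h <= i) && (i < h + 2 * t - 1))%N = false by lia.
  have -> : (i == 2 * h - 1)%N = false by lia. by [].
have E7 : (\sum_(2 * h - 1 <= i < 2 * h) (if inS i then F i else 0) = F (2 * h - 1)%N)%R.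
  rewrite big_ltn; last by lia.
  rewrite big_geq; last by lia.
  by rewrite /inS eqxx !orbT addr0.
rewrite E1 E2 E3 E4 E5 E6 E7 !add0r.
rewrite (_ : (\sum_(b < t - 1) (F (3 + 2 * b)%N + F (4 + 2 * b)%N + F (h + 1 + 2 * b)%N + F (h + 2 + 2 * b)%N) = \sum_(b < t - 1) (F (3 + 2 * b)%N + F (3 + 2 * b + 1)%N) + \sum_(b < t - 1) (F (h + 1 + 2 * b)%N + F (h + 1 + 2 * b + 1)%N))%R); last first.
  rewrite -big_split /=; apply: eq_bigr => b _.
  have -> : (3 + 2 * b + 1 = 4 + 2 * b)%N by lia.
  have -> : (h + 1 + 2 * b + 1 = h + 2 + 2 * b)%N by lia.
  by rewrite !addrA.
set X1 := (\sum_(b < t - 1) (F (3 + 2 * b)%N + _))%R. set X2 := (\sum_(b < t - 1) (F (h + 1 + 2 * b)%N + _))%R.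
ring.
Qed.
End Supp.

Ltac bF := apply/negbTE; apply/negP; (move=> /eqP ? || move=> ?); lia.

Section Constr.
Variables h t : nat.
Hypothesis hodd : odd h.
Hypothesis t_gt0 : (0 < t)%N.
Hypothesis tle : (2 * t + 1 <= h)%N.

Local Notation n := (2 * h)%N.
Local Notation mm := (2 * (2 * h) * (4 * t + 1) + 1)%N.

Lemma h_gt0 : (0 < h)%N. Proof. lia. Qed.

Definition rot (c x : nat) := ((x + c) %% h)%N.
Lemma rot_lt c x : (rot c x < h)%N. Proof. by rewrite /rot ltn_pmod // h_gt0. Qed.

Lemma modE (A C q : nat) : A = (q * h + C)%N -> (A %% h = C %% h)%N.
Proof. by move->; rewrite modnMDl. Qed.

Definition sb (b : nat) := (6 * h + 8 * h * b)%N.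

Definition hv (neg : bool) (W : nat) : int :=
  let g := (if odd W then - Posz ((mm - W) %/ 2)%N else Posz (W %/ 2)%N)%R in
  (if neg then - g else g)%R.
Arguments hv : simpl never.

Definition VL0 b (e : bool) x : int := (if ~~ e then Posz (sb b + 4 * h - rot (3 + 2 * b) x)%N
  else - Posz (sb b + 4 * h + 1 + rot (3 + 2 * b + h - 1) x)%N)%R.
Definition VL1 b (e : bool) x : int := (if ~~ e then - Posz (sb b + 2 * h - rot (3 + 2 * b) x)%N
  else Posz (sb b + 6 * h + 1 + rot (4 + 2 * b) x)%N)%R.
Definition VU0 b (e : bool) x : int := (if ~~ e then Posz (sb b + 1 + rot (3 + 2 * b) x)%N
  else - Posz (sb b + 8 * h - rot (3 + 2 * b + h - 1) x)%N)%R.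
Definition VU1 b (e : bool) x : int := (if ~~ e then - Posz (sb b + 2 * h + 1 + rot (3 + 2 * b) x)%N
  else Posz (sb b + 6 * h - rot (4 + 2 * b) x)%N)%R.

Definition VB0 (e : bool) x := if ~~ e then hv true (3 * h - x)%N else hv true (4 * h - x)%N.
Definition VB2 (e : bool) x := if ~~ e then hv true (8 * h - x)%N else hv true (7 * h - x)%N.
Definition VBH (e : bool) x := if ~~ e then hv false (10 * h - 2 * x)%N else hv false (12 * h - 2 * x)%N.
Definition VB1 (e : bool) x := if ~~ e then hv true (rot (h - 1) x + 1)%N else hv false (5 * h - rot (h - 1) x)%N.
Definition VBN (e : bool) x := if ~~ e then hv false (rot (h - 1) x + h + 1)%N else hv true (6 * h - rot (h - 1) x)%N.

Lemma blk_row b e x : (VL0 b e x + VL1 b e x + VU0 b e x + VU1 b e x = 0)%R.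
Proof.
have := rot_lt (3 + 2 * b) x; have := rot_lt (3 + 2 * b + h - 1) x; have := rot_lt (4 + 2 * b) x.
rewrite /VL0 /VL1 /VU0 /VU1 /sb; case: e => /=; lia.
Qed.

Definition zv (neg : bool) (W : nat) : int := (if neg then - Posz W else Posz W)%R.

Lemma hv2 neg W : (W <= mm)%N -> (hv neg W * 2 = zv neg W - zv neg (odd W) * Posz mm)%R.
Proof.
move=> HW; rewrite /hv /zv; case: neg; case: (boolP (odd W)) => HO /=; lia.
Qed.

Lemma mm_odd : odd mm. Proof. by rewrite addn1 /= !oddM. Qed.

Lemma sum5 (n1 n2 n3 n4 n5 : bool) (W1 W2 W3 W4 W5 : nat) :
  (W1 <= mm)%N -> (W2 <= mm)%N -> (W3 <= mm)%N -> (W4 <= mm)%N -> (W5 <= mm)%N ->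
  (zv n1 W1 + zv n2 W2 + zv n3 W3 + zv n4 W4 + zv n5 W5 = 0)%R ->
  (Posz mm %| (hv n1 W1 + hv n2 W2 + hv n3 W3 + hv n4 W4 + hv n5 W5)%R)%Z.
Proof.
move=> H1 H2 H3 H4 H5 HZ.
rewrite -(@Gauss_dvdzl _ _ 2); last by rewrite coprimezE /= coprimen2 mm_odd.
rewrite !mulrDl !hv2 //.
set z1 := zv n1 W1. set z2 := zv n2 W2. set z3 := zv n3 W3. set z4 := zv n4 W4. set z5 := zv n5 W5.
set y1 := zv n1 (odd W1). set y2 := zv n2 (odd W2). set y3 := zv n3 (odd W3).
set y4 := zv n4 (odd W4). set y5 := zv n5 (odd W5).
have -> : (z1 - y1 * Posz mm + (z2 - y2 * Posz mm) + (z3 - y3 * Posz mm) + (z4 - y4 * Posz mm) + (z5 - y5 * Posz mm)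
   = (z1 + z2 + z3 + z4 + z5) + (- (y1 + y2 + y3 + y4 + y5)) * Posz mm)%R by ring.
by rewrite HZ add0r dvdz_mull.
Qed.

Lemma base_row e x : (x < h)%N ->
  (Posz mm %| (VBN e x + VB0 e x + VB1 e x + VB2 e x + VBH e x)%R)%Z.
Proof.
move=> Hx; have := rot_lt (h - 1) x => HR.
have Hmm : (12 * h <= mm)%N by nia.
case: e; rewrite /VBN /VB0 /VB1 /VB2 /VBH; apply: sum5; rewrite /zv /=; lia.
Qed.

Definition V (d : nat) (e : bool) (x : nat) : int :=
  if d == 0%N then VB0 e x else if d == 1%N then VB1 e x else if d == 2%N then VB2 e x
  else if d == h then VBH e x else if d == (n - 1)%N then VBN e x
  else if (d < 2 * t + 1)%N then (if odd d then VL0 ((d - 3) %/ 2) e x else VL1 ((d - 4) %/ 2) e x)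
  else (if odd (d - h) then VU0 ((d - h - 1) %/ 2) e x else VU1 ((d - h - 2) %/ 2) e x).

Lemma V0E e x : V 0 e x = VB0 e x. Proof. by []. Qed.
Lemma V1E e x : V 1 e x = VB1 e x. Proof. by []. Qed.
Lemma V2E e x : V 2 e x = VB2 e x. Proof. by []. Qed.
Lemma VHE e x : V h e x = VBH e x.
Proof. by rewrite /V ifF; [rewrite ifF; [rewrite ifF; [rewrite eqxx|bF]|bF]|bF]. Qed.
Lemma VNE e x : V (n - 1) e x = VBN e x.
Proof. rewrite /V. repeat (rewrite ifF; last by bF). by rewrite eqxx. Qed.
Lemma VL0E b e x : (b < t - 1)%N -> V (3 + 2 * b) e x = VL0 b e x.
Proof.
move=> Hb; rewrite /V. repeat (rewrite ifF; last by bF).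
rewrite ifT; last by lia. rewrite ifT; last by rewrite oddD oddM.
by have -> : ((3 + 2 * b - 3) %/ 2 = b)%N by lia.
Qed.
Lemma VL1E b e x : (b < t - 1)%N -> V (4 + 2 * b) e x = VL1 b e x.
Proof.
move=> Hb; rewrite /V. repeat (rewrite ifF; last by bF).
rewrite ifT; last by lia. rewrite ifF; last by rewrite oddD oddM.
by have -> : ((4 + 2 * b - 4) %/ 2 = b)%N by lia.
Qed.
Lemma VU0E b e x : (b < t - 1)%N -> V (h + 1 + 2 * b) e x = VU0 b e x.
Proof.
move=> Hb; rewrite /V. repeat (rewrite ifF; last by bF).
rewrite ifT; last by (have -> : (h + 1 + 2 * b - h = 1 + 2 * b)%N by lia); rewrite oddD oddM.
by have -> : ((h + 1 + 2 * b - h - 1) %/ 2 = b)%N by lia.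
Qed.
Lemma VU1E b e x : (b < t - 1)%N -> V (h + 2 + 2 * b) e x = VU1 b e x.
Proof.
move=> Hb; rewrite /V. repeat (rewrite ifF; last by bF).
try (rewrite ifF; last by (have -> : (h + 2 + 2 * b - h = 2 + 2 * b)%N by lia); rewrite oddD oddM).
by have -> : ((h + 2 + 2 * b - h - 2) %/ 2 = b)%N by lia.
Qed.

Lemma row_sum e x : (x < h)%N ->
  (((\sum_(d < n) (if inS h t d then V d e x else 0)) %% Posz mm)%Z = 0)%R.
Proof.
move=> Hx; rewrite (sum_supp t_gt0 tle (fun d => V d e x)) /=.
rewrite V0E V1E V2E VHE VNE.
rewrite big1 ?addr0; last first.
  move=> [b Hb] _ /=; rewrite VL0E // VL1E // VU0E // VU1E //; exact: blk_row.
apply/dvdz_mod0P.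
have := base_row e Hx; congr (_ %| _)%Z; ring.
Qed.

Lemma oddmod j d : (d <= n)%N -> odd ((j + n - d) %% n) = odd j (+) odd d.
Proof.
move=> Hd; rewrite odd_mod; last by rewrite oddM.
rewrite oddB; last by lia.
by rewrite oddD oddM /= addbF.
Qed.

Lemma modmod j d : (((j + n - d) %% n) %% h = (j + n - d) %% h)%N.
Proof. by apply: modn_dvdm; rewrite dvdn_mull. Qed.

Lemma rotm A c C q : (A + c = q * h + C)%N -> rot c (A %% h) = (C %% h)%N.
Proof. move=> E; rewrite /rot modnDml. exact: (modE E). Qed.

Lemma blk_col b j : (b < t - 1)%N -> (j < n)%N ->
  (VL0 b (odd j (+) true) ((j + n - (3 + 2 * b)) %% h) + VL1 b (odd j (+) false) ((j + n - (4 + 2 * b)) %% h)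
  + VU0 b (odd j (+) false) ((j + n - (h + 1 + 2 * b)) %% h) + VU1 b (odd j (+) true) ((j + n - (h + 2 + 2 * b)) %% h) = 0)%R.
Proof.
move=> Hb Hj.
have E1 : rot (3 + 2 * b) ((j + n - (3 + 2 * b)) %% h) = (j %% h)%N by apply: (rotm (q := 2)); clear -Hj Hb tle t_gt0; lia.
have E2 : rot (3 + 2 * b + h - 1) ((j + n - (3 + 2 * b)) %% h) = ((j + h - 1) %% h)%N by apply: (rotm (q := 2)); clear -Hj Hb tle t_gt0; lia.
have E3 : rot (3 + 2 * b) ((j + n - (4 + 2 * b)) %% h) = ((j + h - 1) %% h)%N by apply: (rotm (q := 1)); clear -Hj Hb tle t_gt0; lia.
have E4 : rot (4 + 2 * b) ((j + n - (4 + 2 * b)) %% h) = (j %% h)%N by apply: (rotm (q := 2)); clear -Hj Hb tle t_gt0; lia.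
have E5 : rot (3 + 2 * b) ((j + n - (h + 1 + 2 * b)) %% h) = ((j + 2) %% h)%N by apply: (rotm (q := 1)); clear -Hj Hb tle t_gt0; lia.
have E6 : rot (3 + 2 * b + h - 1) ((j + n - (h + 1 + 2 * b)) %% h) = ((j + 1) %% h)%N by apply: (rotm (q := 2)); clear -Hj Hb tle t_gt0; lia.
have E7 : rot (3 + 2 * b) ((j + n - (h + 2 + 2 * b)) %% h) = ((j + 1) %% h)%N by apply: (rotm (q := 1)); clear -Hj Hb tle t_gt0; lia.
have E8 : rot (4 + 2 * b) ((j + n - (h + 2 + 2 * b)) %% h) = ((j + 2) %% h)%N by apply: (rotm (q := 1)); clear -Hj Hb tle t_gt0; lia.
rewrite /VL0 /VL1 /VU0 /VU1 E1 E2 E3 E4 E5 E6 E7 E8.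
move: (@ltn_pmod j h h_gt0) (@ltn_pmod (j + 1) h h_gt0) (@ltn_pmod (j + 2) h h_gt0) (@ltn_pmod (j + h - 1) h h_gt0).
move: (j %% h)%N ((j + 1) %% h)%N ((j + 2) %% h)%N ((j + h - 1) %% h)%N => Y0 Y1 Y2 Y3 L0 L1 L2 L3.
clear E1 E2 E3 E4 E5 E6 E7 E8; move: (sb b) => S.
case: (odd j) => /=; lia.
Qed.

Lemma base_col j : (j < n)%N ->
  (Posz mm %| (VBN (odd j (+) true) ((j + n - (n - 1)) %% h) + VB0 (odd j) ((j + n - 0) %% h)
     + VB1 (odd j (+) true) ((j + n - 1) %% h) + VB2 (odd j) ((j + n - 2) %% h)
     + VBH (odd j (+) true) ((j + n - h) %% h))%R)%Z.
Proof.
move=> Hj.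
have E1 : rot (h - 1) ((j + n - (n - 1)) %% h) = (j %% h)%N by apply: (rotm (q := 1)); clear -Hj tle t_gt0; lia.
have E2 : ((j + n - 0) %% h = j %% h)%N by apply: (modE (q := 2)); clear -Hj tle t_gt0; lia.
have E3 : rot (h - 1) ((j + n - 1) %% h) = ((j + h - 2) %% h)%N by apply: (rotm (q := 2)); clear -Hj tle t_gt0; lia.
have E4 : ((j + n - 2) %% h = (j + h - 2) %% h)%N by apply: (modE (q := 1)); clear -Hj tle t_gt0; lia.
have E5 : ((j + n - h) %% h = j %% h)%N by apply: (modE (q := 1)); clear -Hj tle t_gt0; lia.
have Hmm : (12 * h <= mm)%N by clear -tle t_gt0; nia.
rewrite /VBN /VB0 /VB1 /VB2 /VBH E1 E2 E3 E4 E5.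
clear E1 E2 E3 E4 E5.
move: (@ltn_pmod j h h_gt0) (@ltn_pmod (j + h - 2) h h_gt0).
move: (j %% h)%N ((j + h - 2) %% h)%N => Y0 Y2 L0 L2.
case: (odd j); apply: sum5; rewrite /zv /=; lia.
Qed.

Lemma col_sum j : (j < n)%N ->
  (((\sum_(d < n) (if inS h t d then V d (odd ((j + n - d) %% n)) (((j + n - d) %% n) %% h) else 0)) %% Posz mm)%Z = 0)%R.
Proof.
move=> Hj; rewrite (sum_supp t_gt0 tle (fun d => V d (odd ((j + n - d) %% n)) (((j + n - d) %% n) %% h))) /=.
rewrite V0E V1E V2E VHE VNE.
rewrite big1 ?addr0; last first.
  move=> [b Hb] _ /=; rewrite VL0E // VL1E // VU0E // VU1E //.
  rewrite !modmod !oddmod; try lia.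
  have -> : odd (3 + 2 * b) = true by lia.
  have -> : odd (4 + 2 * b) = false by bF.
  have -> : odd (h + 1 + 2 * b) = false by bF.
  have -> : odd (h + 2 + 2 * b) = true by lia.
  exact: blk_col.
apply/dvdz_mod0P.
rewrite !modmod !oddmod; try lia.
have -> : odd (n - 1) = true by lia.
rewrite hodd /= addbF.
have := base_col Hj; congr (_ %| _)%Z; ring.
Qed.

Lemma mmE : mm = (16 * (h * t) + 4 * h + 1)%N.
Proof. by rewrite !mulnDr !mulnA !muln1 -[in RHS]mulnA [h * t]mulnC !mulnA; lia. Qed.

Definition g (W : nat) := if odd W then ((mm - W) %/ 2)%N else (W %/ 2)%N.
Definition Wb (s p : nat) := if (s < 8)%N then (1 + s * h + p)%N else (2 + (8 + 2 * (s - 8)) * h + 2 * p)%N.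
Definition enc (s p : nat) := if (s < 10)%N then g (Wb s p) else (6 * h + 1 + (s - 10) * h + p)%N.

Lemma divmod_uniq s1 p1 s2 p2 : (p1 < h)%N -> (p2 < h)%N -> (s1 * h + p1 = s2 * h + p2)%N -> s1 = s2 /\ p1 = p2.
Proof.
move=> H1 H2 E.
have D1 : ((s1 * h + p1) %/ h = s1)%N by rewrite divnMDl ?h_gt0 // divn_small // addn0.
have D2 : ((s2 * h + p2) %/ h = s2)%N by rewrite divnMDl ?h_gt0 // divn_small // addn0.
have M1 : ((s1 * h + p1) %% h = p1)%N by rewrite modnMDl modn_small.
have M2 : ((s2 * h + p2) %% h = p2)%N by rewrite modnMDl modn_small.
by split; [rewrite -D1 -D2 E | rewrite -M1 -M2 E].
Qed.

Lemma Wb_inj s1 p1 s2 p2 : (s1 < 10)%N -> (s2 < 10)%N -> (p1 < h)%N -> (p2 < h)%N ->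
  Wb s1 p1 = Wb s2 p2 -> s1 = s2 /\ p1 = p2.
Proof.
move=> S1 S2 H1 H2; rewrite /Wb.
case: ifP => C1; case: ifP => C2 E.
- by apply: divmod_uniq => //; lia.
- have : (s1 * h <= 7 * h)%N by rewrite leq_mul2r; apply/orP; right; lia.
  have : (8 * h <= (8 + 2 * (s2 - 8)) * h)%N by rewrite leq_mul2r; apply/orP; right; lia.
  lia.
- have : (s2 * h <= 7 * h)%N by rewrite leq_mul2r; apply/orP; right; lia.
  have : (8 * h <= (8 + 2 * (s1 - 8)) * h)%N by rewrite leq_mul2r; apply/orP; right; lia.
  lia.
- have E' : ((s1 - 4) * h + p1 = (s2 - 4) * h + p2)%N.
    have F1 : ((8 + 2 * (s1 - 8)) * h = 2 * ((s1 - 4) * h))%N by rewrite mulnA; congr (_ * _); lia.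
    have F2 : ((8 + 2 * (s2 - 8)) * h = 2 * ((s2 - 4) * h))%N by rewrite mulnA; congr (_ * _); lia.
    move: E; rewrite F1 F2; lia.
  have [] := divmod_uniq H1 H2 E'; split => //; lia.
Qed.

Lemma g_inj W1 W2 : (W1 <= 12 * h)%N -> (W2 <= 12 * h)%N ->
  (odd W1 -> W1 <= 8 * h)%N -> (odd W2 -> W2 <= 8 * h)%N -> g W1 = g W2 -> W1 = W2.
Proof.
move=> B1 B2 O1 O2; rewrite /g mmE.
have HT : (h <= h * t)%N by rewrite leq_pmulr.
move: (h * t) HT => P HT.
case: (boolP (odd W1)) => C1; case: (boolP (odd W2)) => C2.
- lia.
- have := O1 C1; lia.
- have := O2 C2; lia.
- lia.
Qed.

Lemma Wb_bnd s p : (s < 10)%N -> (p < h)%N ->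
  [/\ (Wb s p <= 12 * h)%N, (odd (Wb s p) -> Wb s p <= 8 * h)%N & (0 < Wb s p)%N].
Proof.
move=> S P; rewrite /Wb; case: ifP => C.
- have : (s * h <= 7 * h)%N by rewrite leq_mul2r; apply/orP; right; lia.
  move=> H; split; lia.
- have : ((8 + 2 * (s - 8)) * h <= 10 * h)%N by rewrite leq_mul2r; apply/orP; right; lia.
  have F : ((8 + 2 * (s - 8)) * h = 2 * ((4 + (s - 8)) * h))%N by rewrite mulnA; congr (_ * _); lia.
  move=> H; rewrite F; split; try lia.
  move: ((4 + (s - 8)) * h)%N => X; lia.
Qed.

Lemma enc_inj s1 p1 s2 p2 : (s1 < 8 * t + 2)%N -> (s2 < 8 * t + 2)%N -> (p1 < h)%N -> (p2 < h)%N ->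
  enc s1 p1 = enc s2 p2 -> s1 = s2 /\ p1 = p2.
Proof.
move=> S1 S2 P1 P2; rewrite /enc.
have HT : (h <= h * t)%N by rewrite leq_pmulr.
case: ifP => C1; case: ifP => C2 E.
- have [B1 O1 _] := Wb_bnd C1 P1; have [B2 O2 _] := Wb_bnd C2 P2.
  exact: (Wb_inj C1 C2 P1 P2 (g_inj B1 B2 O1 O2 E)).
- have [B1 O1 _] := Wb_bnd C1 P1.
  have K : ((s2 - 9) * h <= (8 * t - 8) * h)%N by rewrite leq_mul2r; apply/orP; right; lia.
  have K2 : ((8 * t - 8) * h = 8 * (h * t) - 8 * h)%N by rewrite mulnBl -mulnA (mulnC t h).
  have K3 : ((s2 - 9) * h = (s2 - 10) * h + h)%N by rewrite (_ : (s2 - 9 = (s2 - 10) + 1)%N) ?mulnDl ?mul1n; lia.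
  move: E K K2 K3 HT; rewrite /g mmE.
  move: (((s2 - 9) * h)%N) (((8 * t - 8) * h)%N) (((s2 - 10) * h)%N) ((h * t)%N) => A1 A2 A3 P.
  case: ifP => O; [have := O1 O|]; lia.
- have [B1 O1 _] := Wb_bnd C2 P2.
  have K : ((s1 - 9) * h <= (8 * t - 8) * h)%N by rewrite leq_mul2r; apply/orP; right; lia.
  have K2 : ((8 * t - 8) * h = 8 * (h * t) - 8 * h)%N by rewrite mulnBl -mulnA (mulnC t h).
  have K3 : ((s1 - 9) * h = (s1 - 10) * h + h)%N by rewrite (_ : (s1 - 9 = (s1 - 10) + 1)%N) ?mulnDl ?mul1n; lia.
  move: E K K2 K3 HT; rewrite /g mmE.
  move: (((s1 - 9) * h)%N) (((8 * t - 8) * h)%N) (((s1 - 10) * h)%N) ((h * t)%N) => A1 A2 A3 P.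
  case: ifP => O; [have := O1 O|]; lia.
- have E' : ((s1 - 10) * h + p1 = (s2 - 10) * h + p2)%N by lia.
  have [] := divmod_uniq P1 P2 E'; split => //; lia.
Qed.

Definition slot (d : nat) (e : bool) : nat :=
  if d == 0%N then (if ~~ e then 2 else 3)%N else if d == 1%N then (if ~~ e then 0 else 4)%N
  else if d == 2%N then (if ~~ e then 7 else 6)%N
  else if d == h then (if ~~ e then 8 else 9)%N else if d == (n - 1)%N then (if ~~ e then 1 else 5)%N
  else if (d < 2 * t + 1)%N then
    (if odd d then (10 + 8 * ((d - 3) %/ 2) + (if ~~ e then 3 else 4))%N
     else (10 + 8 * ((d - 4) %/ 2) + (if ~~ e then 1 else 6))%N)
  else (if odd (d - h) then (10 + 8 * ((d - h - 1) %/ 2) + (if ~~ e then 0 else 7))%N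
     else (10 + 8 * ((d - h - 2) %/ 2) + (if ~~ e then 2 else 5))%N).

Definition pi (d : nat) (e : bool) (x : nat) : nat :=
  if d == 0%N then (h - 1 - x)%N else if d == 1%N then (if ~~ e then rot (h - 1) x else h - 1 - rot (h - 1) x)%N
  else if d == 2%N then (h - 1 - x)%N
  else if d == h then (h - 1 - x)%N else if d == (n - 1)%N then (if ~~ e then rot (h - 1) x else h - 1 - rot (h - 1) x)%N
  else if (d < 2 * t + 1)%N then
    (if odd d then (if ~~ e then h - 1 - rot (3 + 2 * ((d - 3) %/ 2)) x else rot (3 + 2 * ((d - 3) %/ 2) + h - 1) x)%N
     else (if ~~ e then h - 1 - rot (3 + 2 * ((d - 4) %/ 2)) x else rot (4 + 2 * ((d - 4) %/ 2)) x)%N)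
  else (if odd (d - h) then (if ~~ e then rot (3 + 2 * ((d - h - 1) %/ 2)) x else h - 1 - rot (3 + 2 * ((d - h - 1) %/ 2) + h - 1) x)%N
     else (if ~~ e then rot (3 + 2 * ((d - h - 2) %/ 2)) x else h - 1 - rot (4 + 2 * ((d - h - 2) %/ 2)) x)%N).

Lemma rot_inj c x1 x2 : (x1 < h)%N -> (x2 < h)%N -> rot c x1 = rot c x2 -> x1 = x2.
Proof.
move=> H1 H2; rewrite /rot => /eqP; rewrite eqn_modDr => /eqP.
by rewrite !modn_small.
Qed.

Lemma hr_inj c x1 x2 : (x1 < h)%N -> (x2 < h)%N -> (h - 1 - rot c x1 = h - 1 - rot c x2)%N -> x1 = x2.
Proof.
move=> H1 H2 E; apply: (@rot_inj c _ _ H1 H2).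
move: E (rot_lt c x1) (rot_lt c x2); move: (rot c x1) (rot c x2) => u v; lia.
Qed.

Lemma pi_inj d e x1 x2 : (x1 < h)%N -> (x2 < h)%N -> pi d e x1 = pi d e x2 -> x1 = x2.
Proof.
move=> H1 H2; rewrite /pi.
repeat (case: ifP => _); case: e => /= E;
  first [ exact: (rot_inj H1 H2 E) | exact: (hr_inj H1 H2 E) | lia ].
Qed.

Ltac ev := repeat (first [rewrite ifF; last by bF | rewrite ifT; last by lia]).

Lemma inS_cases d : inS h t d ->
  (d = 0%N \/ d = 1%N \/ d = 2%N \/ d = h \/ d = (n - 1)%N) \/
  exists2 b, (b < t - 1)%N & (d = (3 + 2 * b)%N \/ d = (4 + 2 * b)%N \/ d = (h + 1 + 2 * b)%N \/ d = (h + 2 + 2 * b)%N).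
Proof.
rewrite /inS => H.
case: (ltnP d 3) => [C|C]; first by left; lia.
case: (ltnP d (2 * t + 1)) => [C2|C2].
  right; exists ((d - 3) %/ 2)%N; first by lia.
  case: (boolP (odd d)) => O; lia.
case: (eqVneq d h) => [->|Dh]; first by left; lia.
case: (eqVneq d (n - 1)%N) => [->|Dn]; first by left; lia.
move: H; rewrite (negbTE Dn) orbF; case/orP => [|/andP [H1 H2]]; first by lia.
right; exists ((d - h - 1) %/ 2)%N; first by lia.
case: (boolP (odd (d - h))) => O; lia.
Qed.

Section Evals.
Variables (b : nat) (e : bool) (x : nat).
Hypothesis Hb : (b < t - 1)%N.

Lemma slotL0 : slot (3 + 2 * b) e = (10 + 8 * b + (if ~~ e then 3 else 4))%N.
Proof. rewrite /slot; ev; by have -> : ((3 + 2 * b - 3) %/ 2 = b)%N by lia. Qed.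
Lemma slotL1 : slot (4 + 2 * b) e = (10 + 8 * b + (if ~~ e then 1 else 6))%N.
Proof. rewrite /slot; ev; by have -> : ((4 + 2 * b - 4) %/ 2 = b)%N by lia. Qed.
Lemma slotU0 : slot (h + 1 + 2 * b) e = (10 + 8 * b + (if ~~ e then 0 else 7))%N.
Proof. rewrite /slot; ev; by have -> : ((h + 1 + 2 * b - h - 1) %/ 2 = b)%N by lia. Qed.
Lemma slotU1 : slot (h + 2 + 2 * b) e = (10 + 8 * b + (if ~~ e then 2 else 5))%N.
Proof. rewrite /slot; ev; by have -> : ((h + 2 + 2 * b - h - 2) %/ 2 = b)%N by lia. Qed.

Lemma piL0 : pi (3 + 2 * b) e x = (if ~~ e then h - 1 - rot (3 + 2 * b) x else rot (3 + 2 * b + h - 1) x)%N.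
Proof. rewrite /pi; ev; by have -> : ((3 + 2 * b - 3) %/ 2 = b)%N by lia. Qed.
Lemma piL1 : pi (4 + 2 * b) e x = (if ~~ e then h - 1 - rot (3 + 2 * b) x else rot (4 + 2 * b) x)%N.
Proof. rewrite /pi; ev; by have -> : ((4 + 2 * b - 4) %/ 2 = b)%N by lia. Qed.
Lemma piU0 : pi (h + 1 + 2 * b) e x = (if ~~ e then rot (3 + 2 * b) x else h - 1 - rot (3 + 2 * b + h - 1) x)%N.
Proof. rewrite /pi; ev; by have -> : ((h + 1 + 2 * b - h - 1) %/ 2 = b)%N by lia. Qed.
Lemma piU1 : pi (h + 2 + 2 * b) e x = (if ~~ e then rot (3 + 2 * b) x else h - 1 - rot (4 + 2 * b) x)%N.
Proof. rewrite /pi; ev; by have -> : ((h + 2 + 2 * b - h - 2) %/ 2 = b)%N by lia. Qed.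
End Evals.

Lemma slotH e : slot h e = (if ~~ e then 8 else 9)%N.
Proof. rewrite /slot; ev; by rewrite ?eqxx. Qed.
Lemma slotN e : slot (n - 1) e = (if ~~ e then 1 else 5)%N.
Proof. rewrite /slot; ev; by rewrite ?eqxx. Qed.
Lemma piH e x : pi h e x = (h - 1 - x)%N.
Proof. rewrite /pi; ev; by rewrite ?eqxx. Qed.
Lemma piN e x : pi (n - 1) e x = (if ~~ e then rot (h - 1) x else h - 1 - rot (h - 1) x)%N.
Proof. rewrite /pi; ev; by rewrite ?eqxx. Qed.

Lemma absz_hv neg W : `|hv neg W|%N = g W.
Proof. by rewrite /hv /g; case: neg; case: (odd W); rewrite ?abszN. Qed.

Lemma enc_blk b l p : (l < 8)%N -> enc (10 + 8 * b + l) p = (sb b + l * h + 1 + p)%N.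
Proof.
move=> Hl; rewrite /enc; have -> : (10 + 8 * b + l < 10)%N = false by bF.
have -> : (10 + 8 * b + l - 10 = 8 * b + l)%N by lia.
rewrite mulnDl (mulnAC 8 b h) /sb; lia.
Qed.

Lemma cell_ok d e x : inS h t d -> (x < h)%N ->
  [/\ (slot d e < 8 * t + 2)%N, (pi d e x < h)%N & `|V d e x|%N = enc (slot d e) (pi d e x)].
Proof.
move=> Hd Hx.
have R1 := rot_lt (h - 1) x.
case: (inS_cases Hd) => [[->|[->|[->|[->|->]]]]|[b Hb [->|[->|[->|->]]]]].
- rewrite /V /slot /pi /= /VB0; case: e => /=; rewrite absz_hv /enc /Wb /=; split; try lia; congr g; lia.
- rewrite /V /slot /pi /= /VB1; case: e => /=; rewrite absz_hv /enc /Wb /=; split; try lia; congr g; lia.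
- rewrite /V /slot /pi /= /VB2; case: e => /=; rewrite absz_hv /enc /Wb /=; split; try lia; congr g; lia.
- rewrite VHE slotH piH /VBH; case: e => /=; rewrite absz_hv /enc /Wb /=; split; try lia; congr g; lia.
- rewrite VNE slotN piN /VBN; case: e => /=; rewrite absz_hv /enc /Wb /=; split; try lia; congr g; lia.
- have R2 := rot_lt (3 + 2 * b) x; have R3 := rot_lt (3 + 2 * b + h - 1) x.
  rewrite VL0E // slotL0 // piL0 // /VL0; case: e => /=; rewrite ?abszN ?absz_nat enc_blk //; split; lia.
- have R2 := rot_lt (3 + 2 * b) x; have R3 := rot_lt (4 + 2 * b) x.
  rewrite VL1E // slotL1 // piL1 // /VL1; case: e => /=; rewrite ?abszN ?absz_nat enc_blk //; split; lia.
- have R2 := rot_lt (3 + 2 * b) x; have R3 := rot_lt (3 + 2 * b + h - 1) x.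
  rewrite VU0E // slotU0 // piU0 // /VU0; case: e => /=; rewrite ?abszN ?absz_nat enc_blk //; split; lia.
- have R2 := rot_lt (3 + 2 * b) x; have R3 := rot_lt (4 + 2 * b) x.
  rewrite VU1E // slotU1 // piU1 // /VU1; case: e => /=; rewrite ?abszN ?absz_nat enc_blk //; split; lia.
Qed.

Definition dslot (s : nat) : nat * bool :=
  if s == 0%N then (1%N, false) else if s == 1%N then ((n - 1)%N, false)
  else if s == 2%N then (0%N, false) else if s == 3%N then (0%N, true)
  else if s == 4%N then (1%N, true) else if s == 5%N then ((n - 1)%N, true)
  else if s == 6%N then (2%N, true) else if s == 7%N then (2%N, false)
  else if s == 8%N then (h, false) else if s == 9%N then (h, true)
  else if ((s - 10) %% 8 == 0)%N then ((h + 1 + 2 * ((s - 10) %/ 8))%N, false)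
  else if ((s - 10) %% 8 == 1)%N then ((4 + 2 * ((s - 10) %/ 8))%N, false)
  else if ((s - 10) %% 8 == 2)%N then ((h + 2 + 2 * ((s - 10) %/ 8))%N, false)
  else if ((s - 10) %% 8 == 3)%N then ((3 + 2 * ((s - 10) %/ 8))%N, false)
  else if ((s - 10) %% 8 == 4)%N then ((3 + 2 * ((s - 10) %/ 8))%N, true)
  else if ((s - 10) %% 8 == 5)%N then ((h + 2 + 2 * ((s - 10) %/ 8))%N, true)
  else if ((s - 10) %% 8 == 6)%N then ((4 + 2 * ((s - 10) %/ 8))%N, true)
  else ((h + 1 + 2 * ((s - 10) %/ 8))%N, true).

Ltac ev2 := repeat (first [rewrite ifF; last by bF | rewrite ifT; last by first [apply/eqP; lia | lia]]).

Lemma dslot_blk b l : (l < 8)%N -> dslot (10 + 8 * b + l) =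
  if l == 0%N then ((h + 1 + 2 * b)%N, false) else if l == 1%N then ((4 + 2 * b)%N, false)
  else if l == 2%N then ((h + 2 + 2 * b)%N, false) else if l == 3%N then ((3 + 2 * b)%N, false)
  else if l == 4%N then ((3 + 2 * b)%N, true) else if l == 5%N then ((h + 2 + 2 * b)%N, true)
  else if l == 6%N then ((4 + 2 * b)%N, true) else ((h + 1 + 2 * b)%N, true).
Proof.
move=> Hl; rewrite /dslot.
repeat (rewrite ifF; last by bF).
have -> : ((10 + 8 * b + l - 10) %% 8 = l)%N by lia.
by have -> : ((10 + 8 * b + l - 10) %/ 8 = b)%N by lia.
Qed.

Lemma dslot_slot d e : inS h t d -> dslot (slot d e) = (d, e).
Proof.
move=> Hd.
case: (inS_cases Hd) => [[->|[->|[->|[->|->]]]]|[b Hb [->|[->|[->|->]]]]].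
- by case: e.
- by case: e.
- by case: e.
- by rewrite slotH; case: e.
- by rewrite slotN; case: e.
- by rewrite slotL0 // dslot_blk; case: e.
- by rewrite slotL1 // dslot_blk; case: e.
- by rewrite slotU0 // dslot_blk; case: e.
- by rewrite slotU1 // dslot_blk; case: e.
Qed.

Lemma slot_inj d1 e1 d2 e2 : inS h t d1 -> inS h t d2 -> slot d1 e1 = slot d2 e2 -> d1 = d2 /\ e1 = e2.
Proof.
move=> H1 H2 E; have := dslot_slot e1 H1; rewrite E dslot_slot //.
by case=> -> ->.
Qed.

Lemma enc_range s p : (s < 8 * t + 2)%N -> (p < h)%N -> (0 < enc s p <= 2 * h * (4 * t + 1))%N.
Proof.
move=> S P; rewrite /enc.
have HT : (h <= h * t)%N by rewrite leq_pmulr.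
have N1 : (2 * h * (4 * t + 1) = 8 * (h * t) + 2 * h)%N by nia.
case: ifP => C.
- have [B O Z] := Wb_bnd C P.
  rewrite /g mmE N1; move: (h * t)%N HT => Q HT.
  case: ifP => Od; [have := O Od|]; lia.
- have K : ((s - 9) * h <= (8 * t - 8) * h)%N by rewrite leq_mul2r; apply/orP; right; lia.
  have K2 : ((8 * t - 8) * h = 8 * (h * t) - 8 * h)%N by rewrite mulnBl -mulnA (mulnC t h).
  have K3 : ((s - 9) * h = (s - 10) * h + h)%N by rewrite (_ : (s - 9 = (s - 10) + 1)%N) ?mulnDl ?mul1n; lia.
  move: K K2 K3 HT; rewrite N1.
  move: (((s - 9) * h)%N) (((8 * t - 8) * h)%N) (((s - 10) * h)%N) ((h * t)%N) => A1 A2 A3 Q.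
  lia.
Qed.

Lemma n_gt0 : (0 < n)%N. Proof. lia. Qed.

Definition A : parray n := fun i j =>
  let d := ((j + n - i) %% n)%N in if inS h t d then Some (V d (odd i) (i %% h)) else None.

Definition shr (i j : 'I_n) : 'I_n := Ordinal (@ltn_pmod (j + n - i) n n_gt0).

Lemma shr_injr i : injective (shr i).
Proof.
move=> j1 j2 /(congr1 val) /= /eqP.
have Hi := ltn_ord i.
have -> : (j1 + n - i = j1 + (n - i))%N by lia.
have -> : (j2 + n - i = j2 + (n - i))%N by lia.
rewrite eqn_modDr !modn_small // => /eqP E; exact: val_inj.
Qed.

Lemma shr_invol j : involutive (fun i => shr i j).
Proof.
move=> i; apply: val_inj => /=.
have Hi := ltn_ord i; have Hj := ltn_ord j.
set u := ((j + n - i) %% n)%N.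
have Hu : (u < n)%N by rewrite /u ltn_pmod // n_gt0.
have E1 : (j + n - u + u = j + n)%N by lia.
have E2 : ((i + u) %% n = (j + n) %% n)%N.
  by rewrite /u modnDmr; congr (_ %% _); lia.
have : ((j + n - u + u) %% n == (i + u) %% n)%N by rewrite E1 E2.
by rewrite eqn_modDr => /eqP ->; rewrite modn_small.
Qed.

Lemma shr_injl j : injective (fun i => shr i j).
Proof. exact: inv_inj (shr_invol j). Qed.

Lemma card_supp : #|[set d : 'I_n | inS h t d]| = (4 * t + 1)%N.
Proof.
apply/eqP; rewrite -eqz_nat; apply/eqP.
rewrite -natz -sum1_card natr_sum big_mkcond /=.
rewrite (eq_bigr (fun d : 'I_n => if inS h t d then 1%R else 0%R)); last first.
  by move=> d _; rewrite inE; case: (inS h t d).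
rewrite (sum_supp t_gt0 tle (fun _ => 1%R)) sumr_const card_ord.
rewrite -mulr_natr natz.
lia.
Qed.

Lemma filledA (i j : 'I_n) : filled (A i j) = inS h t (shr i j).
Proof. by rewrite /A /filled /=; case: (inS h t _). Qed.

Lemma cvA (i j : 'I_n) : cell_val (A i j) = if inS h t (shr i j) then V (shr i j) (odd i) (i %% h) else 0%R.
Proof. by rewrite /A /cell_val /=; case: (inS h t _). Qed.

Lemma row_count (i : 'I_n) : #|[set j : 'I_n | filled (A i j)]| = (4 * t + 1)%N.
Proof.
have -> : [set j : 'I_n | filled (A i j)] = shr i @^-1: [set d : 'I_n | inS h t d].
  by apply/setP => j; rewrite !inE filledA.
by rewrite card_preimset ?card_supp //; exact: (@shr_injr i).
Qed.

Lemma col_count (j : 'I_n) : #|[set i : 'I_n | filled (A i j)]| = (4 * t + 1)%N.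
Proof.
have -> : [set i : 'I_n | filled (A i j)] = (fun i => shr i j) @^-1: [set d : 'I_n | inS h t d].
  by apply/setP => i; rewrite !inE filledA.
by rewrite card_preimset ?card_supp //; exact: (@shr_injl j).
Qed.

Lemma row_sumA (i : 'I_n) : ((\sum_(j : 'I_n) cell_val (A i j)) %% Posz mm)%Z = 0%R.
Proof.
have Hx : (i %% h < h)%N by apply: ltn_pmod; exact: h_gt0.
have H := row_sum (odd i) Hx.
rewrite (reindex_inj (@shr_injr i)) /= in H.
rewrite (eq_bigr (fun j => if inS h t (shr i j) then V (shr i j) (odd i) (i %% h) else 0%R)); first exact: H.
by move=> j _; rewrite cvA.
Qed.

Lemma col_sumA (j : 'I_n) : ((\sum_(i : 'I_n) cell_val (A i j)) %% Posz mm)%Z = 0%R.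
Proof.
have H := col_sum (ltn_ord j).
rewrite (reindex_inj (@shr_injl j)) /= in H.
rewrite (eq_bigr (fun i : 'I_n => if inS h t (shr i j) then V (shr i j) (odd ((j + n - shr i j) %% n)) (((j + n - shr i j) %% n) %% h) else 0%R)); first exact: H.
move=> i _; rewrite cvA.
have E : (((j + n - shr i j) %% n)%N = i) by have := shr_invol j i => /(congr1 val).
by rewrite E.
Qed.

Lemma crt a b : (a < n)%N -> (b < n)%N -> odd a = odd b -> (a %% h = b %% h)%N -> a = b.
Proof.
move=> Ha Hb Ho Hm.
have cop : coprime 2 h by rewrite coprime2n.
have : (a == b %[mod 2 * h])%N by rewrite chinese_remainder // !modn2 Ho Hm !eqxx.
by rewrite !modn_small // => /eqP.
Qed.

Definition mag (ij : 'I_n * 'I_n) : nat := `|cell_val (A ij.1 ij.2)|%N.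
Definition Fc := [set ij : 'I_n * 'I_n | filled (A ij.1 ij.2)].

Lemma mag_enc (i j : 'I_n) : filled (A i j) ->
  [/\ (slot (shr i j) (odd i) < 8 * t + 2)%N, (pi (shr i j) (odd i) (i %% h) < h)%N &
      mag (i, j) = enc (slot (shr i j) (odd i)) (pi (shr i j) (odd i) (i %% h))].
Proof.
rewrite filledA => F.
have Hx : (i %% h < h)%N by apply: ltn_pmod; exact: h_gt0.
have [S P M] := cell_ok (odd i) F Hx.
by split => //; rewrite /mag /= cvA F.
Qed.

Lemma mag_range ij : ij \in Fc -> (0 < mag ij <= 2 * h * (4 * t + 1))%N.
Proof.
case: ij => i j; rewrite inE /= => F.
have [S P ->] := mag_enc F.
exact: enc_range.
Qed.

Lemma mag_inj : {in Fc &, injective mag}.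
Proof.
move=> [i1 j1] [i2 j2]; rewrite !inE /= => F1 F2 E.
have [S1 P1 M1] := mag_enc F1; have [S2 P2 M2] := mag_enc F2.
rewrite M1 M2 in E.
have [Es Ep] := enc_inj S1 S2 P1 P2 E.
rewrite filledA in F1; rewrite filledA in F2.
have [Ed Ee] := slot_inj F1 F2 Es.
rewrite Ed Ee in Ep.
have Ex := pi_inj (ltn_pmod i1 h_gt0) (ltn_pmod i2 h_gt0) Ep.
have Ei : i1 = i2 by apply: val_inj; apply: crt => //; exact: ltn_ord.
subst i2.
have Ej : j1 = j2 by apply: (@shr_injr i1); apply: val_inj.
by subst j2.
Qed.

Lemma card_Fc : #|Fc| = (n * (4 * t + 1))%N.
Proof.
rewrite -sum1_card.
rewrite (eq_bigl (fun ij : 'I_n * 'I_n => true && filled (A ij.1 ij.2))); last by move=> ij; rewrite inE.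
rewrite -(pair_big_dep xpredT (fun i j => filled (A i j)) (fun _ _ => 1%N)) /=.
rewrite (eq_bigr (fun _ => (4 * t + 1)%N)); last first.
  by move=> i _; rewrite -(row_count i) -sum1_card; apply: eq_bigl => j; rewrite inE.
by rewrite sum_nat_const card_ord.
Qed.

Lemma absz_pm (v : int) (x : nat) : `|v|%N = x -> v = Posz x \/ v = (- Posz x)%R.
Proof. by case: v => a /= <-; [left | right; rewrite NegzE]. Qed.

Lemma cover (x : nat) : (1 <= x <= n * (4 * t + 1))%N ->
  #|[set ij : 'I_n * 'I_n | (A ij.1 ij.2 == Some (Posz x)) || (A ij.1 ij.2 == Some (- Posz x)%R)]| = 1%N.
Proof.
move=> /andP [Hx1 Hx2].
set N := (n * (4 * t + 1))%N.
pose f := fun ij => (inord (mag ij) : 'I_N.+1).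
have finj : {in Fc &, injective f}.
  move=> a b Ha Hb /(congr1 (@nat_of_ord _)); rewrite /f !inordK.
  - by apply: mag_inj.
  - by have := mag_range Hb; rewrite /N; lia.
  - by have := mag_range Ha; rewrite /N; lia.
have HM : [set f ij | ij in Fc] = [set~ (ord0 : 'I_N.+1)].
  apply/eqP; rewrite eqEcard; apply/andP; split.
  - apply/subsetP => u /imsetP [ij Hij ->]; rewrite !inE.
    apply/eqP => /(congr1 (@nat_of_ord _)); rewrite /f inordK /=; last by have := mag_range Hij; rewrite /N; lia.
    by have := mag_range Hij; lia.
  - by rewrite card_in_imset // card_Fc cardsC1 card_ord.
have : (inord x : 'I_N.+1) \in [set f ij | ij in Fc].
  by rewrite HM !inE; apply/eqP => /(congr1 (@nat_of_ord _)); rewrite inordK /=; lia.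
case/imsetP => ij0 H0 /(congr1 (@nat_of_ord _)); rewrite /f !inordK; first last.
  - by lia.
  - by have := mag_range H0; rewrite /N; lia.
move=> Emag.
suff -> : [set ij : 'I_n * 'I_n | (A ij.1 ij.2 == Some (Posz x)) || (A ij.1 ij.2 == Some (- Posz x)%R)] = [set ij0].
  by rewrite cards1.
apply/setP => ij; rewrite !inE.
apply/idP/idP.
- move=> Hij.
  have Fij : ij \in Fc.
    rewrite inE /filled; case/orP: Hij => /eqP ->; by [].
  have Mij : mag ij = x.
    rewrite /mag; case/orP: Hij => /eqP -> /=; by rewrite ?abszN.
  by apply/eqP; apply: mag_inj => //; rewrite Mij.
- move/eqP => ->.
  move: H0 Emag; rewrite inE /mag /filled.
  case: (A ij0.1 ij0.2) => [v|] //= _ Ev.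
  by case: (absz_pm (esym Ev)) => ->; rewrite eqxx ?orbT.
Qed.

Lemma nonzeroA (i j : 'I_n) a : A i j = Some a -> a != 0%R.
Proof.
move=> E.
have F : filled (A i j) by rewrite E.
have := mag_range (ij := (i, j)); rewrite inE /= => /(_ F).
rewrite /mag /= E /=; apply: contraTneq => ->; by [].
Qed.

Lemma heffterA : is_heffter (4 * t + 1) A.
Proof.
rewrite /is_heffter; split; [|split; [|split; [|split; [|split]]]].
- exact: nonzeroA.
- exact: row_count.
- exact: col_count.
- exact: row_sumA.
- exact: col_sumA.
- exact: cover.
Qed.

End Constr.

Unset Implicit Arguments.
Set Strict Implicit.

Theorem theorem7p2 (n k : nat) :
  n %% 4 = 2 -> 6 <= n -> k %% 4 = 1 -> 5 <= k -> k < n ->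
  exists A : parray n, is_heffter k A.
Proof.
move=> Hn Hn6 Hk Hk5 Hkn.
have [h Eh] : exists h, n = 2 * h by exists (n %/ 2); lia.
have [t Et] : exists t, k = 4 * t + 1 by exists (k %/ 4); lia.
subst n k.
have hodd : odd h by lia.
exists (@A h t).
apply: heffterA => //; lia.
Qed.
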